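(* Let $\Gamma=(V,E)$ be a $2$-connected finite simple graph with marked vertices $a,b$, symmetric over $a$ and $b$, generating the hierarchical lattice $\{\Gamma_n\}$, and let $R(q,y)=(q,r_q(y))$ be its renormalization mapping. Then there is no iterate $n\ge0$ such that $r_q^n(0)\equiv1-q$ identically in $q$.
   Context: Hierarchical lattice: $\Gamma_0$ a single edge, $\Gamma_1=\Gamma$, $\Gamma_{n+1}$ obtained by replacing each edge of $\Gamma$ with a copy of $\Gamma_n$ (marked vertices as endpoints). The renormalization mapping: $r_q(y)=\mathcal{U}_\Gamma(q,y)/\mathcal{V}_\Gamma(q,y)$, where for integer $q\ge2$, $\mathcal{U}_\Gamma=\sum_{\sigma(a)=\sigma(b)=1}y^{\mathcal{E}(\sigma)}$ and $\mathcal{V}_\Gamma=\sum_{\sigma(a)=1,\sigma(b)=2}y^{\mathcal{E}(\sigma)}$, the sums over $\sigma:V\to\{1,\dots,q\}$ and $\mathcal{E}(\sigma)$ the number of edges with equal endpoint values (these are polynomials in $(q,y)$). $2$-connected: at least three vertices and no cut vertex. *)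

(* Defs.v *)
From HB Require Import structures.
From mathcomp Require Import all_boot all_order all_algebra all_fingroup fraction.
Set Implicit Arguments. Unset Strict Implicit. Unset Printing Implicit Defensive.
Import Order.TTheory GRing.Theory Num.Theory FracField.
Local Open Scope ring_scope.

(* A finite simple graph is given by a symmetric irreflexive relation e on a finType V. *)

Definition edges (V : finType) (e : rel V) : {set {set V}} :=
  [set [set p.1; p.2] | p : V * V & e p.1 p.2].

(* E(sigma): number of edges whose two endpoints get equal values.
   Colours {1,...,q} are represented by 'I_q = {0,...,q-1}. *)
Definition energy (V : finType) (e : rel V) (q : nat) (s : {ffun V -> 'I_q}) : nat :=
  #|[set E0 in edges e | [forall x in E0, forall y in E0, s x == s y]]|.

(* U_Gamma(q,y): sum over sigma with sigma(a) = sigma(b) = colour "1" (index 0). *)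
Definition sumU (V : finType) (e : rel V) (a b : V) (q y : nat) : nat :=
  (\sum_(s : {ffun V -> 'I_q} | (val (s a) == 0%N) && (val (s b) == 0%N))
      y ^ energy e s)%N.

(* V_Gamma(q,y): sum over sigma with sigma(a) = "1" (index 0), sigma(b) = "2" (index 1). *)
Definition sumV (V : finType) (e : rel V) (a b : V) (q y : nat) : nat :=
  (\sum_(s : {ffun V -> 'I_q} | (val (s a) == 0%N) && (val (s b) == 1%N))
      y ^ energy e s)%N.

Definition connected_in (V : finType) (e : rel V) (S : {set V}) : Prop :=
  forall x y, x \in S -> y \in S ->
    connect [rel u v | [&& e u v, u \in S & v \in S]] x y.

Definition two_connected (V : finType) (e : rel V) : Prop :=
  [/\ (3 <= #|V|)%N, connected_in e [set: V]
    & forall v : V, connected_in e (~: [set v])].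

Definition ab_symmetric (V : finType) (e : rel V) (a b : V) : Prop :=
  exists phi : {perm V},
    [/\ forall x y, e (phi x) (phi y) = e x y, phi a = b & phi b = a].

Definition Kq := {fraction {poly rat}}.
Definition qK : Kq := tofrac ('X : {poly rat}).

(* A polynomial in y with coefficients in Q[q], viewed in Q(q)[y]. *)
Definition liftP (P : {poly {poly rat}}) : {poly Kq} :=
  map_poly (fun c : {poly rat} => (tofrac c : Kq)) P.

(* The rational map y |-> U(y)/V(y) over Q(q), in lowest terms, acting on the
   projective line P^1(Q(q)) = option Kq (None = infinity). *)
Definition rhat (U W : {poly Kq}) (x : option Kq) : option Kq :=
  let g := gcdp U W in
  let U' := U %/ g in
  let W' := W %/ g in
  match x with
  | Some y => if W'.[y] == 0 then None else Some (U'.[y] / W'.[y])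
  | None =>
      if (size W' < size U')%N then None
      else if size U' == size W' then Some (lead_coef U' / lead_coef W')
      else Some 0
  end.

(* Main.v *)
Require Import Defs.
From HB Require Import structures.
From mathcomp Require Import all_boot all_order all_algebra all_fingroup fraction.
From mathcomp Require Import zify.
Import Order.TTheory GRing.Theory Num.Theory FracField.
Set Implicit Arguments. Unset Strict Implicit. Unset Printing Implicit Defensive.
Local Open Scope ring_scope.
Local Notation "x %:F" := (@tofrac _ x).
Lemma growth (p : {poly rat}) (M : nat) (C : rat) :
  (forall k : nat, (2 <= k)%N -> `|p.[k%:R]| <= C * k%:R ^+ M) -> (size p <= M.+1)%N.
Proof.
move=> H; rewrite leqNgt; apply/negP => Hs.
set d := (size p).-1.
have Hd : size p = d.+1 by rewrite /d prednK // (leq_trans _ Hs).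
have dM : (M < d)%N by rewrite -ltnS -Hd.
have p0 : p != 0 by rewrite -size_poly_eq0 Hd.
set c := lead_coef p.
have c0 : c != 0 by rewrite lead_coef_eq0.
set A := \sum_(i < d) `|p`_i|.
have A0 : 0 <= A by apply: sumr_ge0 => i _; exact: normr_ge0.
have key : forall x : rat, 1 <= x -> `|c| * x ^+ d <= `|p.[x]| + A * x ^+ d.-1.
  move=> x x1.
  have x0 : 0 <= x by apply: le_trans x1.
  rewrite (horner_coef_wide _ (leqnn (size p))) Hd big_ord_recr /=.
  have -> : p`_d = c by rewrite /c lead_coefE Hd.
  set S := \sum_(i < d) _.
  have HS : `|S| <= A * x ^+ d.-1.
    apply: le_trans (ler_norm_sum _ _ _) _.
    rewrite /A mulr_suml; apply: ler_sum => i _.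
    rewrite normrM normrX (ger0_norm x0); apply: ler_wpM2l; first exact: normr_ge0.
    apply: ler_weXn2l => //. by rewrite -ltnS prednK // (leq_ltn_trans _ dM).
  have -> : `|c| * x ^+ d = `|(S + c * x ^+ d) - S|.
    by rewrite addrC addKr normrM normrX (ger0_norm x0).
  apply: le_trans (ler_normB _ _) _; exact: lerD.
pose B := (`|C| + A) / `|c|.
have B0 : 0 <= B by apply: divr_ge0; [apply: addr_ge0 => //; exact: normr_ge0| exact: normr_ge0].
pose k := (Num.bound B).+2.
have k1 : (1 : rat) <= k%:R by rewrite ler1n.
have Hk := key _ k1.
have Hk2 := H k isT.
have hd : d = d.-1.+1 by rewrite prednK // (leq_ltn_trans _ dM).
have kpos : 0 < (k%:R : rat) ^+ d.-1 by apply: exprn_gt0; apply: lt_le_trans k1.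
have : `|c| * k%:R <= `|C| + A.
  rewrite -(ler_pM2r kpos) mulrDl -mulrA -exprS -hd.
  apply: le_trans Hk _; rewrite lerD2r.
  apply: le_trans Hk2 _.
  apply: le_trans (ler_wpM2r _ (ler_norm C)) _; first by apply: exprn_ge0; exact: le_trans k1.
  apply: ler_wpM2l; first exact: normr_ge0.
  apply: ler_weXn2l => //; by rewrite -ltnS -hd.
move=> H3.
have cpos : 0 < `|c| by rewrite normr_gt0.
suff : `|C| + A < `|c| * k%:R by rewrite ltNge H3.
rewrite -(ltr_pdivrMl _ _ cpos) mulrC.
apply: lt_le_trans (archi_boundP B0) _.
by rewrite ler_nat /k; apply: leqW; apply: leqW.
Qed.
Definition swapc (P : {poly {poly rat}}) (i : nat) : {poly rat} :=
  \poly_(j < size P) (P`_j)`_i.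

Lemma swapcE P i (c : rat) : (P.[c%:P])`_i = (swapc P i).[c].
Proof.
rewrite horner_poly horner_coef coef_sum; apply: eq_bigr => j _.
by rewrite -rmorphXn coefMC.
Qed.

Lemma coef_swapc (P : {poly {poly rat}}) i j : (P`_j)`_i = (swapc P i)`_j.
Proof.
rewrite coef_poly; case: ltnP => // Hj.
by rewrite (nth_default 0 Hj) coef0.
Qed.

Lemma roots_nat (p : {poly rat}) : (forall m : nat, p.[m%:R] = 0) -> p = 0.
Proof.
move=> H; apply/eqP; apply/negPn/negP => p0.
suff : (size p < size p)%N by rewrite ltnn.
have := max_poly_roots p0 (rs := [seq m%:R | m <- iota 0 (size p)]).
rewrite size_map size_iota; apply.
  by apply/allP => x /mapP [m _ ->]; apply/rootP; exact: H.
by rewrite map_inj_uniq ?iota_uniq // => m n /eqP; rewrite eqr_nat => /eqP.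
Qed.
Lemma expn_mono y k K : (k <= K)%N -> (y ^ k <= (y + 1) ^ K)%N.
Proof.
move=> kK; apply: (@leq_trans ((y+1)^k)).
  by case: k {kK} => [|k] //; rewrite leq_exp2r // addn1.
by apply: leq_pexp2l; rewrite ?addn1.
Qed.

Lemma energy_le (V : finType) (e : rel V) q (s : {ffun V -> 'I_q}) :
  (energy e s <= #|edges e|)%N.
Proof.
apply: subset_leq_card; apply/subsetP => E0; rewrite inE => /andP[] //.
Qed.

Lemma energy_pos (V : finType) (e : rel V) q (s : {ffun V -> 'I_q}) :
  energy e s != 0%N -> exists x y, e x y && (s x == s y).
Proof.
rewrite /energy cards_eq0 => /set0Pn [E0]; rewrite inE => /andP[].
move=> /imsetP [p]; rewrite inE => ep -> /forall_inP H.
exists p.1, p.2; rewrite ep /=.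
by have /forall_inP := H p.1 (set21 _ _); apply; rewrite set22.
Qed.
Definition famS (V : finType) (q : nat) (S : {set V}) (c : V -> nat) : {set {ffun V -> 'I_q}} :=
  [set s : {ffun V -> 'I_q} | [forall x in S, val (s x) == c x]].

Lemma card_famS (V : finType) q (S : {set V}) c :
  (forall x, x \in S -> (c x < q)%N) -> #|famS q S c| = (q ^ #|~: S|)%N.
Proof.
move=> Hc.
pose F := fun x : V => if x \in S then [pred i : 'I_q | val i == c x] else predT.
rewrite (_ : famS q S c = [set s in family F]); last first.
  apply/setP => s; rewrite !inE; apply/forall_inP/familyP => H x.
    by rewrite /F; case: ifP => // xS; rewrite inE /=; apply: H.
  by move=> xS; have := H x; rewrite /F xS.
rewrite cardsE card_family foldrE big_map big_enum /=.
rewrite (bigID (mem S)) /= big1 ?mul1n; last first.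
  move=> x xS; rewrite /F xS.
  have h := Hc x xS.
  by rewrite (eq_card (B := pred1 (Ordinal h))) ?card1 // => i; rewrite !inE -val_eqE.
rewrite -prod_nat_const; apply: eq_big => x; first by rewrite !inE.
by move=> xS; rewrite /F (negbTE xS) cardT size_enum_ord.
Qed.

Definition cV (V : finType) (b : V) : V -> nat := fun x => if x == b then 1%N else 0%N.

Lemma sumU_famS (V : finType) (e : rel V) a b q y :
  sumU e a b q y = (\sum_(s in famS q [set a; b] (fun _ => 0%N)) y ^ energy e s)%N.
Proof.
rewrite /sumU; apply: eq_bigl => s; rewrite inE.
apply/andP/forall_inP => [[H1 H2] x|H].
  by case/set2P => ->.
by split; apply: H; rewrite !inE eqxx ?orbT.
Qed.

Lemma sumV_famS (V : finType) (e : rel V) a b q y : a != b ->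
  sumV e a b q y = (\sum_(s in famS q [set a; b] (cV b)) y ^ energy e s)%N.
Proof.
move=> ab; rewrite /sumV; apply: eq_bigl => s; rewrite inE /cV.
apply/andP/forall_inP => [[H1 H2] x|H].
  by case/set2P => ->; rewrite ?eqxx // (negbTE ab).
split; first by have := H a (set21 _ _); rewrite (negbTE ab).
by have := H b (set22 _ _); rewrite eqxx.
Qed.

Lemma card_ab (V : finType) (a b : V) : a != b -> #|~: [set a; b]| = (#|V| - 2)%N.
Proof. move=> ab; have := cardsC [set a; b]; rewrite cards2 ab; lia. Qed.

Lemma card_abz (V : finType) (a b z : V) : a != b -> z \notin [set a; b] ->
  #|~: [set a; b; z]| = (#|V| - 3)%N.
Proof.
move=> ab zab.
have -> : [set a; b; z] = z |: [set a; b].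
  by apply/setP => x; rewrite !inE; case: (x == a); case: (x == b); case: (x == z).
have := cardsC (z |: [set a; b]); rewrite cardsU1 zab cards2 ab; lia.
Qed.

Lemma bad_aux (V : finType) (a b z w : V) q : (2 <= q)%N -> a != b ->
  z \notin [set a; b] -> w != z ->
  (#|[set s in famS q [set a; b] (cV b) | s z == s w]| <= q ^ (#|V| - 3))%N.
Proof.
move=> q2 ab zab wz.
have za : z != a by apply: contraNneq zab => ->; rewrite !inE eqxx.
have zb : z != b by apply: contraNneq zab => ->; rewrite !inE eqxx orbT.
pose phi := fun s : {ffun V -> 'I_q} => [ffun x => if x == z then s a else s x].
rewrite -(card_in_imset (f := phi)); last first.
  move=> s1 s2; rewrite !inE => /andP[_ /eqP h1] /andP[_ /eqP h2] /ffunP E.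
  apply/ffunP => x; case: (eqVneq x z) => [->|xz].
    rewrite h1 h2; have := E w; rewrite !ffunE (negbTE wz) //.
  by have := E x; rewrite !ffunE (negbTE xz).
rewrite -(card_abz ab zab) -(@card_famS _ q _ (cV b)); last first.
  move=> x; rewrite /cV; case: (x == b) => //; lia.
apply: subset_leq_card; apply/subsetP => t /imsetP [s]; rewrite !inE => /andP[/forall_inP H _] ->.
apply/forall_inP => x; rewrite !inE => /orP [/orP [xa|xb]|xz]; rewrite ffunE.
- have az : a != z by rewrite eq_sym.
  by rewrite (eqP xa) (negbTE az); apply: H; exact: set21.
- have bz : b != z by rewrite eq_sym.
  by rewrite (eqP xb) (negbTE bz); apply: H; exact: set22.
- rewrite xz /cV (eqP xz) (negbTE zb).
  by have := H a (set21 _ _); rewrite /cV (negbTE ab).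
Qed.

Lemma bad_le (V : finType) (e : rel V) (a b x y : V) q : (2 <= q)%N -> a != b ->
  irreflexive e -> e x y ->
  (#|[set s in famS q [set a; b] (cV b) | s x == s y]| <= q ^ (#|V| - 3))%N.
Proof.
move=> q2 ab irr exy.
have xy : x != y by apply: contraTneq exy => ->; rewrite irr.
case xab: (x \in [set a; b]); last first.
  by apply: bad_aux => //; [rewrite xab | rewrite eq_sym].
case yab: (y \in [set a; b]); last first.
  rewrite (eq_card (B := [set s in famS q [set a; b] (cV b) | s y == s x])).
    by apply: bad_aux => //; rewrite yab.
  by move=> s; rewrite !inE eq_sym.
apply: (@leq_trans 0); last by [].
rewrite leqn0 cards_eq0; apply/eqP/setP => s; rewrite !inE.
apply/negP => /andP[/forall_inP H /eqP sxy].
have := H x xab; have := H y yab; rewrite sxy => /eqP ->.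
move: xab yab xy; rewrite /cV !inE.
case/orP => /eqP -> /orP [] /eqP ->; rewrite ?eqxx ?(negbTE ab) //.
Qed.

Lemma count_eq (T : finType) (A : {set T}) (P : pred T) :
  (\sum_(s in A) (P s : nat))%N = #|[set s in A | P s]|.
Proof.
rewrite -sum1dep_card [LHS]big_mkcond [RHS]big_mkcond /=.
by apply: eq_bigr => s _; case: (s \in A); case: (P s).
Qed.

Lemma sumV_close (V : finType) (e : rel V) (a b : V) k m : (2 <= k)%N -> a != b ->
  irreflexive e ->
  let X := (#|V| * #|V| * ((m + 1) ^ #|edges e|) * k ^ (#|V| - 3))%N in
  (sumV e a b k m <= k ^ (#|V| - 2) + X)%N /\ (k ^ (#|V| - 2) <= sumV e a b k m + X)%N.
Proof.
move=> k2 ab irr X.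
set F := famS k [set a; b] (cV b).
set Y := ((m + 1) ^ #|edges e|)%N.
pose t := fun s : {ffun V -> 'I_k} => (\sum_(p : V * V | e p.1 p.2) (s p.1 == s p.2 : nat))%N.
have cF : #|F| = (k ^ (#|V| - 2))%N.
  rewrite /F card_famS ?card_ab // => x _; rewrite /cV; case: (x == b); lia.
have Bd : (\sum_(s in F) t s <= #|V| * #|V| * k ^ (#|V| - 3))%N.
  rewrite /t exchange_big /=.
  apply: (@leq_trans (\sum_(p : V * V) k ^ (#|V| - 3))%N); last first.
    by rewrite sum_nat_const cardT -cardE card_prod.
  rewrite [X in (X <= _)%N]big_mkcond; apply: leq_sum => p _.
  case: ifP => ep //; rewrite count_eq; exact: bad_le.
have Y1 : (1 <= Y)%N by rewrite expn_gt0 addn1.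
have pw : forall s, (m ^ energy e s <= 1 + t s * Y)%N /\ (1 <= m ^ energy e s + t s * Y)%N.
  move=> s; case: (eqVneq (energy e s) 0%N) => [->|en0]; first by rewrite expn0; split; lia.
  have [x [y /andP [exy sxy]]] := energy_pos en0.
  have t1 : (1 <= t s)%N.
    rewrite /t (bigD1 (x, y)) //= sxy; lia.
  have mY : (m ^ energy e s <= Y)%N := expn_mono m (energy_le e s).
  have : (Y <= t s * Y)%N by rewrite leq_pmull.
  split; lia.
have eS : forall G : {ffun V -> 'I_k} -> nat,
    (\sum_(s in F) (G s + t s * Y) = \sum_(s in F) G s + (\sum_(s in F) t s) * Y)%N.
  by move=> G; rewrite big_split /= big_distrl.
have BX : ((\sum_(s in F) t s) * Y <= X)%N.
  rewrite /X mulnAC; exact: leq_mul.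
rewrite sumV_famS //; split.
  apply: (@leq_trans (\sum_(s in F) (1 + t s * Y))%N); first by apply: leq_sum => s _; exact: (pw s).1.
  rewrite (eS (fun _ => 1%N)) sum1_card cF; lia.
rewrite -cF -sum1_card.
apply: (@leq_trans (\sum_(s in F) (m ^ energy e s + t s * Y))%N); first by apply: leq_sum => s _; exact: (pw s).2.
rewrite eS -/F; lia.
Qed.
Lemma sizeM_le (p q : {poly rat}) (x y : nat) :
  (size p <= x.+1)%N -> (size q <= y.+1)%N -> (size (p * q)%R <= (x + y).+1)%N.
Proof. move=> hp hq; have := size_polyMleq p q; lia. Qed.

Lemma sizeX_le (p : {poly rat}) (x k : nat) :
  (size p <= x.+1)%N -> (size (p ^+ k)%R <= (x * k).+1)%N.
Proof.
move=> hp; apply: leq_trans (size_poly_exp_leq _ _) _; rewrite ltnS leq_mul2r.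
by apply/orP; right; lia.
Qed.

Lemma sizeSum_le (K T : nat) (F : 'I_K -> {poly rat}) :
  (forall j, size (F j) <= T)%N -> (size (\sum_(j < K) F j)%R <= T)%N.
Proof.
move=> H; apply: (big_ind (fun p : {poly rat} => size p <= T)%N) => //.
  by rewrite size_poly0.
by move=> p q hp hq; apply: leq_trans (size_polyD _ _) _; rewrite geq_max hp hq.
Qed.

Definition numer (P : {poly {poly rat}}) (K : nat) (n d : {poly rat}) :=
  \sum_(j < K) P`_j * n ^+ j * d ^+ (K - j).

Lemma liftP_eval (P : {poly {poly rat}}) (K : nat) (n d : {poly rat}) :
  d != 0 -> (size P <= K)%N ->
  (liftP P).[n%:F / d%:F] = (numer P K n d)%:F / (d%:F) ^+ K.
Proof.
move=> d0 hK.
have dF : (d%:F : Kq) != 0 by rewrite tofrac_eq0.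
have hs : (size (liftP P) <= K)%N.
  rewrite /liftP size_map_inj_poly //.
  by move=> x y /eqP; rewrite tofrac_eq => /eqP.
rewrite (horner_coef_wide _ hs) /numer rmorph_sum /= mulr_suml; apply: eq_bigr => j _.
rewrite coef_map /= !rmorphM !rmorphXn /= expr_div_n.
have hj : (j <= K)%N by apply: ltnW.
have -> : (d%:F : Kq) ^+ K = d%:F ^+ j * d%:F ^+ (K - j) by rewrite -exprD subnKC.
have dj : (d%:F : Kq) ^+ (K - j) != 0 by rewrite expf_neq0.
rewrite -(@mulf_div Kq ((P`_j)%:F * n%:F ^+ j) (d%:F ^+ j) (d%:F ^+ (K - j)) (d%:F ^+ (K - j))) (divff dj) mulr1.
by rewrite mulrA.
Qed.

Lemma numer_size (P : {poly {poly rat}}) K N (n d : {poly rat}) s :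
  (forall j, size (P`_j)%R <= N.+1)%N -> (size n <= s.+1)%N -> (size d <= s.+1)%N ->
  (size (numer P K n d) <= (N + K * s).+1)%N.
Proof.
move=> hP hn hd; apply: sizeSum_le => j.
apply: leq_trans (sizeM_le (sizeM_le (hP j) (sizeX_le j hn)) (sizeX_le (K - j) hd)) _.
have : (s * j + s * (K - j) = K * s)%N by rewrite -mulnDr subnKC 1?mulnC // ltnW.
lia.
Qed.

Lemma step (PU PV : {poly {poly rat}}) N :
  (0 < N)%N ->
  (forall j, size (PU`_j)%R <= N.+1)%N -> (forall j, 0 < j -> size (PV`_j)%R <= N)%N ->
  size (PV`_0) = N.+1 ->
  forall n d : {poly rat}, d != 0 -> (size n <= size d)%N ->
  exists n' d' : {poly rat}, d' != 0 /\ (size n' <= size d')%N /\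
     rhat (liftP PU) (liftP PV) (Some (n%:F / d%:F)) = Some (n'%:F / d'%:F).
Proof.
move=> N0 hU hV h0 n d d0 nd.
set K := maxn (size PU) (size PV).
set s := (size d).-1.
have hd : (size d <= s.+1)%N by rewrite /s; lia.
have hn : (size n <= s.+1)%N by lia.
have PV0 : PV`_0 != 0 by rewrite -size_poly_eq0 h0.
have K0 : (0 < K)%N.
  rewrite /K; apply: leq_trans (leq_maxr _ _); rewrite lt0n size_poly_eq0.
  by apply: contra PV0 => /eqP ->; rewrite coef0.
set u := numer PU K n d.
set w := numer PV K n d.
have su : (size u <= (N + K * s).+1)%N.
  by apply: numer_size.
have sw : size w = (N + K * s).+1.
  have [K' eK] : exists K', K = K'.+1 by exists K.-1; rewrite prednK.
  rewrite /w /numer eK big_ord_recl /= expr0 mulr1 subn0.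
  have dK : d ^+ K'.+1 != 0 by rewrite expf_neq0.
  have sT : size (PV`_0 * d ^+ K'.+1) = (N + K'.+1 * s).+1.
    rewrite size_mul // h0.
    have := size_exp d K'.+1; rewrite -/s.
    have : (0 < size (d ^+ K'.+1))%N by rewrite lt0n size_poly_eq0.
    move: (size _) => z; rewrite (mulnC s); lia.
  rewrite size_polyDl sT //.
  apply: leq_ltn_trans (sizeSum_le (T := (N + K'.+1 * s)) _) _ => //.
  move=> j /=.
  have hPj : (size (PV`_(bump 0 j))%R <= (N.-1).+1)%N by rewrite prednK //; apply: hV.
  apply: leq_trans (sizeM_le (sizeM_le hPj (sizeX_le (bump 0 j) hn)) (sizeX_le (K'.+1 - bump 0 j) hd)) _.
  have : (s * bump 0 j + s * (K'.+1 - bump 0 j) = K'.+1 * s)%N.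
    rewrite -mulnDr subnKC 1?mulnC // /bump /=. by have := ltn_ord j; lia.
  lia.
have w0 : w != 0 by rewrite -size_poly_eq0 sw.
have dF : (d%:F : Kq) != 0 by rewrite tofrac_eq0.
have dKF : (d%:F : Kq) ^+ K != 0 by rewrite expf_neq0.
have eU : (liftP PU).[n%:F / d%:F] = u%:F / d%:F ^+ K by apply: liftP_eval => //; exact: leq_maxl.
have eW : (liftP PV).[n%:F / d%:F] = w%:F / d%:F ^+ K by apply: liftP_eval => //; exact: leq_maxr.
have W0 : (liftP PV).[n%:F / d%:F] != 0.
  by rewrite eW; apply: mulf_neq0; [rewrite tofrac_eq0 | rewrite invr_eq0].
exists u, w; split; first exact: w0.
split; first by rewrite sw.
rewrite /rhat.
set U := liftP PU; set W := liftP PV; set g := gcdp U W.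
have HU : U = U %/ g * g by rewrite (divpK (dvdp_gcdl U W)).
have HW : W = W %/ g * g by rewrite (divpK (dvdp_gcdr U W)).
have : W.[n%:F / d%:F] = (W %/ g).[n%:F / d%:F] * g.[n%:F / d%:F] by rewrite {1}HW hornerM.
move=> eWg.
have W'0 : (W %/ g).[n%:F / d%:F] != 0.
  by move: W0; rewrite -/W eWg; apply: contra => /eqP ->; rewrite mul0r.
have g0 : g.[n%:F / d%:F] != 0.
  by move: W0; rewrite -/W eWg; apply: contra => /eqP ->; rewrite mulr0.
rewrite (negbTE W'0); congr Some.
have eU' : U.[n%:F / d%:F] = (U %/ g).[n%:F / d%:F] * g.[n%:F / d%:F] by rewrite {1}HU hornerM.
have -> : (U %/ g).[n%:F / d%:F] / (W %/ g).[n%:F / d%:F] = U.[n%:F / d%:F] / W.[n%:F / d%:F].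
  by rewrite eU' eWg -mulf_div (divff g0) mulr1.
rewrite /U /W eU eW -mulf_div.
have dKi : (d%:F : Kq) ^- K != 0 by rewrite invr_eq0; exact: dKF.
by rewrite (divff dKi) mulr1.
Qed.

Lemma sumU_le (V : finType) (e : rel V) (a b : V) k m : (0 < k)%N -> a != b ->
  (sumU e a b k m <= k ^ (#|V| - 2) * (m + 1) ^ #|edges e|)%N.
Proof.
move=> k0 ab; rewrite sumU_famS.
apply: (@leq_trans (\sum_(s in famS k [set a; b] (fun _ => 0%N)) (m + 1) ^ #|edges e|)%N).
  by apply: leq_sum => s _; apply: expn_mono; exact: energy_le.
by rewrite sum_nat_const card_famS ?card_ab.
Qed.

Lemma dist_nat (x y c : nat) : (x <= y + c)%N -> (y <= x + c)%N ->
  `|x%:R - y%:R : rat| <= c%:R.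
Proof.
move=> h1 h2; case: (leqP y x) => h.
  by rewrite -natrB // normr_nat ler_nat; lia.
by rewrite distrC -natrB ?(ltnW h) // normr_nat ler_nat; lia.
Qed.

Lemma coefU (V : finType) (e : rel V) (a b : V) (PU : {poly {poly rat}}) : a != b ->
  (forall q y : nat, (2 <= q)%N -> PU.[y%:R].[q%:R] = (sumU e a b q y)%:R) ->
  forall j, (size (PU`_j)%R <= (#|V| - 2).+1)%N.
Proof.
move=> ab HU.
have Hg : forall m : nat, (size PU.[m%:R] <= (#|V| - 2).+1)%N.
  move=> m; apply: (@growth _ _ ((m + 1) ^ #|edges e|)%:R) => k k2.
  rewrite HU // normr_nat -natrX -natrM ler_nat mulnC; apply: sumU_le => //; lia.
move=> j; apply/leq_sizeP => i Hi.
rewrite coef_swapc (_ : swapc PU i = 0) ?coef0 //.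
apply: roots_nat => m; rewrite -swapcE polyC_natr.
exact: (leq_sizeP _ _ (Hg m)).
Qed.

Lemma coefV (V : finType) (e : rel V) (a b : V) (PV : {poly {poly rat}}) : a != b ->
  irreflexive e -> (3 <= #|V|)%N ->
  (forall q y : nat, (2 <= q)%N -> PV.[y%:R].[q%:R] = (sumV e a b q y)%:R) ->
  forall j i, (#|V| - 2 <= i)%N ->
    (PV`_j)`_i = if j == 0%N then (i == (#|V| - 2)%N)%:R else 0.
Proof.
move=> ab irr V3 HV.
have eN : (#|V| - 2 = (#|V| - 3).+1)%N by lia.
have Hg : forall m : nat, (size (PV.[m%:R] - 'X^(#|V| - 2))%R <= (#|V| - 2))%N.
  move=> m; rewrite [X in (_ <= X)%N]eN.
  apply: (@growth _ _ (#|V| * #|V| * (m + 1) ^ #|edges e|)%:R) => k k2.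
  rewrite hornerD hornerN hornerXn HV // -natrX -natrM.
  have [h1 h2] := sumV_close m k2 ab irr.
  by rewrite -natrX; apply: dist_nat.
move=> j i Hi.
rewrite coef_swapc (_ : swapc PV i = ((i == (#|V| - 2)%N)%:R)%:P); last first.
  apply/eqP; rewrite -subr_eq0; apply/eqP.
  apply: roots_nat => m; rewrite hornerD hornerN hornerC -swapcE polyC_natr.
  have := (leq_sizeP _ _ (Hg m)) i Hi.
  by rewrite coefB coefXn => /eqP; rewrite subr_eq0 => /eqP ->; rewrite subrr.
by rewrite coefC.
Qed.

Lemma not_bounded (n d : {poly rat}) : d != 0 -> (size n <= size d)%N ->
  1 - qK <> n%:F / d%:F.
Proof.
move=> d0 nd E.
have dF : (d%:F : Kq) != 0 by rewrite tofrac_eq0.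
have : ((1 - 'X) * d)%:F = n%:F :> Kq.
  by rewrite tofracM tofracB tofrac1 -/qK E (divfK dF).
move/eqP; rewrite tofrac_eq => /eqP Hn.
have s1 : size (1 - 'X : {poly rat}) = 2%N.
  by rewrite -opprB size_polyN -(@polyC1 rat) size_XsubC.
have n1 : (1 - 'X : {poly rat}) != 0 by rewrite -size_poly_eq0 s1.
by move: nd; rewrite -Hn size_mul // s1 add2n /= ltnn.
Qed.

Unset Implicit Arguments.

Theorem proposition6p1 (V : finType) (e : rel V) (a b : V)
    (PU PV : {poly {poly rat}}) :
  symmetric e -> irreflexive e -> a != b ->
  two_connected e -> ab_symmetric e a b ->
  (forall q y : nat, (2 <= q)%N -> PU.[y%:R].[q%:R] = (sumU e a b q y)%:R) ->
  (forall q y : nat, (2 <= q)%N -> PV.[y%:R].[q%:R] = (sumV e a b q y)%:R) ->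
  ~ exists n : nat,
      iter n (rhat (liftP PU) (liftP PV)) (Some 0) = Some (1 - qK).
Proof.
move=> _ irr ab [V3 _ _] _ HU HV [n Hn].
have N0 : (0 < #|V| - 2)%N by lia.
have hU := coefU ab HU.
have hC := coefV ab irr V3 HV.
have hVj : forall j, (0 < j)%N -> (size (PV`_j)%R <= #|V| - 2)%N.
  move=> j j0; apply/leq_sizeP => i Hi; rewrite hC //.
  by case: j j0.
have h0 : size (PV`_0) = (#|V| - 2).+1.
  apply/eqP; rewrite eqn_leq; apply/andP; split.
    apply/leq_sizeP => i Hi; rewrite hC ?eqxx; last by apply: ltnW.
    by rewrite (gtn_eqF Hi).
  rewrite ltnNge; apply/negP => /leq_sizeP /(_ _ (leqnn _)).
  by rewrite hC // => /eqP; rewrite pnatr_eq0 eqxx.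
have inv : forall k, exists n0 d0 : {poly rat}, d0 != 0 /\ (size n0 <= size d0)%N /\
    iter k (rhat (liftP PU) (liftP PV)) (Some 0) = Some (n0%:F / d0%:F).
  elim => [|k [n0 [d0 [d00 [s0 e0]]]]].
    exists 0, 1; split; first exact: oner_neq0.
    split; first by rewrite size_poly0.
    by rewrite /= tofrac0 mul0r.
  rewrite iterS e0; exact: (step N0 hU hVj h0 d00 s0).
have [n0 [d0 [d00 [s0 e0]]]] := inv n.
rewrite e0 in Hn; case: Hn => Hn.
exact: (not_bounded d00 s0 (esym Hn)).
Qed.
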